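(* For all real $(B,A)$ with $A\neq0$ (and $l=B/\omega\ge0$, $\mu=A/(2\omega)>0$), the unimodular normalized monodromy matrix $\widetilde M=e^{\pi il}M$ has real trace; equivalently $\operatorname{tr}\widetilde M=2\cos(\pi l)+e^{\pi il}c_0c_1\in\mathbb R$, i.e. $e^{\pi il}c_0c_1\in\mathbb R$.
   Context: Fix $\omega>0$; $l=B/\omega$, $\mu=A/(2\omega)$. System (L): $u'=z^{-2}\big(-(lz+\mu(1+z^2))u+\frac{z}{2i\omega}v\big)$, $v'=\frac{1}{2i\omega z}u$. Its projectivization $\Phi=v/u$ is the complexification (via $\Phi=e^{i\phi}$, $z=e^{i\tau}$) of $\frac{d\phi}{d\tau}=-\frac{\sin\phi}{\omega}+l+2\mu\cos\tau$. $F(z)=\operatorname{diag}(z^{-l}e^{\mu(1/z-z)},1)$; $S_\pm$ are sectors with vertex $0$ containing the closed upper/lower half-plane minus $0$, closures avoiding $i\mathbb R_\mp$, $S_-=\overline{S_+}$; $H_\pm$ are the unique invertible matrix functions holomorphic on $S_\pm$, $C^\infty$ on $\overline{S_\pm}\setminus\{\infty\}$, $H_\pm(0)=\mathrm{Id}$, transforming (L) into $\tilde u'=-z^{-2}(lz+\mu(1+z^2))\tilde u$, $\tilde v'=0$; $W_\pm=H_\pm F$ (branch on $S_-$ by counterclockwise continuation from $S_+$), $W_{+,1}=H_+F$ with branch continued counterclockwise from $S_-$. With $\Sigma_0\ni\mathbb R_-$, $\Sigma_1\ni\mathbb R_+$ the components of $S_+\cap S_-$: $W_-=W_+C_0$ on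 $\Sigma_0$, $W_{+,1}=W_-C_1$ on $\Sigma_1$, $C_0=\begin{pmatrix}1&c_0\\0&1\end{pmatrix}$, $C_1=\begin{pmatrix}1&0\\c_1&1\end{pmatrix}$. $M_N=\operatorname{diag}(e^{-2\pi il},1)$. The monodromy matrix of (L) along a counterclockwise circuit around $0$, in the basis $W_+$, is $M=M_NC_1^{-1}C_0^{-1}$, and $\widetilde M=e^{\pi il}M$. *)

(* Defs.v *)
From Stdlib Require Import Reals.
Open Scope R_scope.

Record Cpx := mkC { re : R ; im : R }.

Definition Czero : Cpx := mkC 0 0.
Definition Cone : Cpx := mkC 1 0.
Definition Ci : Cpx := mkC 0 1.
Definition RtoC (x : R) : Cpx := mkC x 0.
Definition Cadd (a b : Cpx) : Cpx := mkC (re a + re b) (im a + im b).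
Definition Copp (a : Cpx) : Cpx := mkC (- re a) (- im a).
Definition Cmul (a b : Cpx) : Cpx :=
  mkC (re a * re b - im a * im b) (re a * im b + im a * re b).
Definition Cinv (a : Cpx) : Cpx :=
  mkC (re a / (re a * re a + im a * im a)) (- im a / (re a * re a + im a * im a)).
Definition Cexpi (t : R) : Cpx := mkC (cos t) (sin t).

Definition has_cderiv (f : R -> Cpx) (t : R) (f' : Cpx) : Prop :=
  derivable_pt_lim (fun s => re (f s)) t (re f') /\
  derivable_pt_lim (fun s => im (f s)) t (im f').

Definition L_u (omega B A : R) (z u v : Cpx) : Cpx :=
  let l := B / omega in
  let mu := A / (2 * omega) in
  Cmul (Cinv (Cmul z z))
    (Cadd (Cmul (Copp (Cadd (Cmul (RtoC l) z)
                           (Cmul (RtoC mu) (Cadd Cone (Cmul z z))))) u)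
          (Cmul (Cmul z (Cinv (Cmul (mkC 0 2) (RtoC omega)))) v)).

Definition L_v (omega B A : R) (z u v : Cpx) : Cpx :=
  Cmul (Cinv (Cmul (Cmul (mkC 0 2) (RtoC omega)) z)) u.

(* (u,v) is a solution of (L) continued along the counterclockwise unit
   circle z = e^{i tau}: d/dtau [w(e^{i tau})] = i e^{i tau} w'(z). *)
Definition solves_L_on_circle (omega B A : R) (u v : R -> Cpx) : Prop :=
  forall tau : R,
    let z := Cexpi tau in
    has_cderiv u tau (Cmul (Cmul Ci z) (L_u omega B A z (u tau) (v tau))) /\
    has_cderiv v tau (Cmul (Cmul Ci z) (L_v omega B A z (u tau) (v tau))).

(* Main.v *)
Require Import Defs.
From Stdlib Require Import Reals Lra Nsatz.
Open Scope R_scope.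
Definition conjC (z:Cpx) := mkC (re z) (- im z).
Lemma Cinv_unit z : re z * re z + im z * im z = 1 -> Cinv (Cmul z z) = Cmul (conjC z) (conjC z).
Proof. destruct z as [c s]; unfold Cinv, Cmul, conjC; simpl; intro H.
assert (D: (c*c - s*s)*(c*c-s*s) + (c*s+s*c)*(c*s+s*c) = 1).
{ replace ((c*c - s*s)*(c*c-s*s) + (c*s+s*c)*(c*s+s*c)) with ((c*c+s*s)*(c*c+s*s)) by ring. rewrite H; ring. }
rewrite D. f_equal; field. Qed.
Lemma Cinv_2w w : w <> 0 -> Cinv (Cmul (mkC 0 2) (RtoC w)) = mkC 0 (- / (2*w)).
Proof. intro. unfold Cinv, Cmul, RtoC; simpl; f_equal; field; auto. Qed.
Lemma Cinv_2wz w z : w <> 0 -> re z * re z + im z * im z = 1 -> Cinv (Cmul (Cmul (mkC 0 2) (RtoC w)) z) = Cmul (mkC 0 (- / (2*w))) (conjC z).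
Proof. destruct z as [c s]; intros Hw H; simpl in H. unfold Cinv, Cmul, RtoC, conjC; simpl.
 f_equal.
 - replace ((0 * w - 2 * 0) * c - (0 * 0 + 2 * w) * s) with (-(2*w*s)) by ring.
   replace ((0 * w - 2 * 0) * s + (0 * 0 + 2 * w) * c) with (2*w*c) by ring.
   replace (- (2 * w * s) * - (2 * w * s) + 2 * w * c * (2 * w * c)) with (4*w*w*(c*c+s*s)) by ring.
   rewrite H. field; auto.
 - replace ((0 * w - 2 * 0) * c - (0 * 0 + 2 * w) * s) with (-(2*w*s)) by ring.
   replace ((0 * w - 2 * 0) * s + (0 * 0 + 2 * w) * c) with (2*w*c) by ring.
   replace (- (2 * w * s) * - (2 * w * s) + 2 * w * c * (2 * w * c)) with (4*w*w*(c*c+s*s)) by ring.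
   rewrite H. field; auto.
Qed.
Lemma Lu_circ w B A t u v : w <> 0 ->
  Cmul (Cmul Ci (Cexpi t)) (L_u w B A (Cexpi t) u v) =
  mkC ((B/w + 2*(A/(2*w))*cos t) * im u + / (2*w) * re v)
      (- ((B/w + 2*(A/(2*w))*cos t) * re u) + / (2*w) * im v).
Proof. intro Hw. assert (H: re (Cexpi t) * re (Cexpi t) + im (Cexpi t) * im (Cexpi t) = 1).
{ simpl. rewrite <- (sin2_cos2 t). unfold Rsqr. ring. }
unfold L_u. rewrite Cinv_unit by exact H. rewrite Cinv_2w by exact Hw.
simpl in H. destruct u as [x y]; destruct v as [X Y].
unfold Cmul, Cadd, Copp, RtoC, Ci, Cone, conjC, Cexpi in *; simpl in *.
set (l := B/w). set (mu := A/(2*w)). set (a := / (2*w)). set (c := cos t) in *. set (s := sin t) in *.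
f_equal; nsatz.
Qed.
Lemma Lv_circ w B A t u v : w <> 0 ->
  Cmul (Cmul Ci (Cexpi t)) (L_v w B A (Cexpi t) u v) =
  mkC (/ (2*w) * re u) (/ (2*w) * im u).
Proof. intro Hw. assert (H: re (Cexpi t) * re (Cexpi t) + im (Cexpi t) * im (Cexpi t) = 1).
{ simpl. rewrite <- (sin2_cos2 t). unfold Rsqr. ring. }
unfold L_v. rewrite Cinv_2wz by assumption.
simpl in H. destruct u as [x y].
unfold Cmul, Cadd, Copp, RtoC, Ci, Cone, conjC, Cexpi in *; simpl in *.
set (a := / (2*w)). set (c := cos t) in *. set (s := sin t) in *.
f_equal; nsatz.
Qed.
Lemma dplus f g x l1 l2 : derivable_pt_lim f x l1 -> derivable_pt_lim g x l2 -> derivable_pt_lim (fun t => f t + g t) x (l1+l2).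
Proof. apply derivable_pt_lim_plus. Qed.
Lemma dminus f g x l1 l2 : derivable_pt_lim f x l1 -> derivable_pt_lim g x l2 -> derivable_pt_lim (fun t => f t - g t) x (l1-l2).
Proof. apply derivable_pt_lim_minus. Qed.
Lemma dmult f g x l1 l2 : derivable_pt_lim f x l1 -> derivable_pt_lim g x l2 -> derivable_pt_lim (fun t => f t * g t) x (l1 * g x + f x * l2).
Proof. intros; apply (derivable_pt_lim_mult f g); auto. Qed.
Lemma dopp f x l : derivable_pt_lim f x l -> derivable_pt_lim (fun t => - f t) x (- l).
Proof. apply derivable_pt_lim_opp. Qed.
Lemma dext f x l L : derivable_pt_lim f x l -> l = L -> derivable_pt_lim f x L.
Proof. intros; subst; auto. Qed.
Lemma dtheta l m x : derivable_pt_lim (fun t => l*t + 2*m*sin t) x (l + 2*m*cos x).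
Proof. eapply dext. apply dplus. apply dmult. apply derivable_pt_lim_const. apply derivable_pt_lim_id.
 apply dmult. apply derivable_pt_lim_const. apply derivable_pt_lim_sin. cbv beta; ring. Qed.
Lemma dcos l m x : derivable_pt_lim (fun t => cos (l*t + 2*m*sin t)) x (- sin (l*x + 2*m*sin x) * (l + 2*m*cos x)).
Proof. eapply dext. apply (derivable_pt_lim_comp (fun t => l*t + 2*m*sin t) cos). apply dtheta. apply derivable_pt_lim_cos. cbv beta; ring. Qed.
Lemma dsin l m x : derivable_pt_lim (fun t => sin (l*t + 2*m*sin t)) x (cos (l*x + 2*m*sin x) * (l + 2*m*cos x)).
Proof. eapply dext. apply (derivable_pt_lim_comp (fun t => l*t + 2*m*sin t) sin). apply dtheta. apply derivable_pt_lim_sin. cbv beta; ring. Qed.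
Lemma const0 f : (forall t, derivable_pt_lim f t 0) -> f (2*PI) = f 0.
Proof. intro H. pose (pr := fun t => exist (fun l => derivable_pt_lim f t l) 0 (H t) : derivable_pt f t).
 destruct (MVT_cor1 f 0 (2*PI) pr) as [c [Hc _]]. pose proof PI_RGT_0; lra.
 simpl in Hc. lra. Qed.
Lemma sol_deriv w B A u v : w <> 0 -> solves_L_on_circle w B A u v -> forall t,
 derivable_pt_lim (fun s => re (u s)) t ((B/w + 2*(A/(2*w))*cos t) * im (u t) + / (2*w) * re (v t)) /\
 derivable_pt_lim (fun s => im (u s)) t (- ((B/w + 2*(A/(2*w))*cos t) * re (u t)) + / (2*w) * im (v t)) /\
 derivable_pt_lim (fun s => re (v s)) t (/ (2*w) * re (u t)) /\
 derivable_pt_lim (fun s => im (v s)) t (/ (2*w) * im (u t)).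
Proof. intros Hw H t. pose proof (H t) as Ht. cbv zeta in Ht.
 rewrite Lu_circ, Lv_circ in Ht by exact Hw. destruct Ht as [[H1 H2] [H3 H4]]. simpl in *. auto. Qed.

Ltac dtac := repeat (first [apply dminus | apply dplus | apply dopp | apply dmult | eassumption | apply dcos | apply dsin]).

Theorem mainTheorem9 :
  forall (omega B A : R),
    0 < omega -> A <> 0 -> 0 <= B / omega -> 0 < A / (2 * omega) ->
    forall u1 v1 u2 v2 : R -> Cpx,
      solves_L_on_circle omega B A u1 v1 ->
      solves_L_on_circle omega B A u2 v2 ->
      u1 0 = Cone -> v1 0 = Czero -> u2 0 = Czero -> v2 0 = Cone ->
      im (Cmul (Cexpi (PI * (B / omega)))
               (Cadd (u1 (2 * PI)) (v2 (2 * PI)))) = 0.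
Proof.
intros w B A Hw _ _ _ u1 v1 u2 v2 S1 S2 I1 I2 I3 I4.
assert (Hw0 : w <> 0) by lra.
pose proof (sol_deriv w B A u1 v1 Hw0 S1) as D1.
pose proof (sol_deriv w B A u2 v2 Hw0 S2) as D2.
set (E1 := fun t => re(u1 t)*re(u1 t) + im(u1 t)*im(u1 t) - (re(v1 t)*re(v1 t) + im(v1 t)*im(v1 t))).
assert (C1 : E1 (2*PI) = E1 0).
{ apply const0; intro t; destruct (D1 t) as (a1&a2&a3&a4); destruct (D2 t) as (b1&b2&b3&b4).
  unfold E1; eapply dext; [dtac | cbv beta; ring]. }
set (E2 := fun t => re(u1 t)*re(u2 t) + im(u1 t)*im(u2 t) - (re(v1 t)*re(v2 t) + im(v1 t)*im(v2 t))).
assert (C2 : E2 (2*PI) = E2 0).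
{ apply const0; intro t; destruct (D1 t) as (a1&a2&a3&a4); destruct (D2 t) as (b1&b2&b3&b4).
  unfold E2; eapply dext; [dtac | cbv beta; ring]. }
set (E3 := fun t => re(u1 t)*im(u2 t) - im(u1 t)*re(u2 t) - (re(v1 t)*im(v2 t) - im(v1 t)*re(v2 t))).
assert (C3 : E3 (2*PI) = E3 0).
{ apply const0; intro t; destruct (D1 t) as (a1&a2&a3&a4); destruct (D2 t) as (b1&b2&b3&b4).
  unfold E3; eapply dext; [dtac | cbv beta; ring]. }
set (Wr := fun t => re(u1 t)*re(v2 t) - im(u1 t)*im(v2 t) - (re(u2 t)*re(v1 t) - im(u2 t)*im(v1 t))).
set (Wi := fun t => re(u1 t)*im(v2 t) + im(u1 t)*re(v2 t) - (re(u2 t)*im(v1 t) + im(u2 t)*re(v1 t))).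
set (E4 := fun t => Wr t * cos (B/w*t + 2*(A/(2*w))*sin t) - Wi t * sin (B/w*t + 2*(A/(2*w))*sin t)).
set (E5 := fun t => Wr t * sin (B/w*t + 2*(A/(2*w))*sin t) + Wi t * cos (B/w*t + 2*(A/(2*w))*sin t)).
assert (C4 : E4 (2*PI) = E4 0).
{ apply const0; intro t; destruct (D1 t) as (a1&a2&a3&a4); destruct (D2 t) as (b1&b2&b3&b4).
  unfold E4, Wr, Wi; eapply dext; [dtac | cbv beta; ring]. }
assert (C5 : E5 (2*PI) = E5 0).
{ apply const0; intro t; destruct (D1 t) as (a1&a2&a3&a4); destruct (D2 t) as (b1&b2&b3&b4).
  unfold E5, Wr, Wi; eapply dext; [dtac | cbv beta; ring]. }
unfold E1, E2, E3, E4, E5, Wr, Wi in *.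
rewrite I1, I2, I3, I4 in *. rewrite sin_2PI, sin_0 in *.
replace (B / w * (2 * PI) + 2 * (A / (2 * w)) * 0) with (2 * (PI * (B/w))) in * by ring.
replace (B / w * 0 + 2 * (A / (2 * w)) * 0) with 0 in * by ring.
rewrite cos_0, sin_0, cos_2a, sin_2a in *.
pose proof (sin2_cos2 (PI * (B/w))) as SC. unfold Rsqr in SC.
unfold Cmul, Cadd, Cexpi, Cone, Czero in *; simpl in *.
set (c := cos (PI * (B/w))) in *. set (s := sin (PI * (B/w))) in *.
set (x1 := re (u1 (2*PI))) in *. set (y1 := im (u1 (2*PI))) in *.
set (x2 := re (u2 (2*PI))) in *. set (y2 := im (u2 (2*PI))) in *.
set (X1 := re (v1 (2*PI))) in *. set (Y1 := im (v1 (2*PI))) in *.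
set (X2 := re (v2 (2*PI))) in *. set (Y2 := im (v2 (2*PI))) in *.
clearbody c s x1 y1 x2 y2 X1 Y1 X2 Y2.
ring_simplify in C1. ring_simplify in C2. ring_simplify in C3. ring_simplify in C4. ring_simplify in C5.
set (Sr := c^2 - s^2). set (Si := 2*c*s).
assert (e1 : x1^2+y1^2-X1^2-Y1^2-1 = 0) by lra.
assert (e2 : x1 * x2 + y1 * y2 - X1 * X2 - Y1 * Y2 = 0) by lra.
assert (e3 : x1 * y2 - y1 * x2 - X1 * Y2 + Y1 * X2 = 0) by lra.
assert (e4 : ((x1*X2 - y1*Y2) - (x2*X1 - y2*Y1))*Sr - ((x1*Y2 + y1*X2) - (x2*Y1 + y2*X1))*Si - 1 = 0)
  by (unfold Sr, Si; lra).
assert (e5 : ((x1*X2 - y1*Y2) - (x2*X1 - y2*Y1))*Si + ((x1*Y2 + y1*X2) - (x2*Y1 + y2*X1))*Sr = 0)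
  by (unfold Sr, Si; lra).
assert (Pr : X2*Sr - Y2*Si - x1 = 0).
{ replace (X2*Sr - Y2*Si - x1) with
   (-(X2*Sr - Y2*Si)*(x1^2+y1^2-X1^2-Y1^2-1) + (X1*Sr-Y1*Si)*(x1 * x2 + y1 * y2 - X1 * X2 - Y1 * Y2)
    - (X1*Si+Y1*Sr)*(x1 * y2 - y1 * x2 - X1 * Y2 + Y1 * X2)
    + x1*(((x1*X2 - y1*Y2) - (x2*X1 - y2*Y1))*Sr - ((x1*Y2 + y1*X2) - (x2*Y1 + y2*X1))*Si - 1)
    + y1*(((x1*X2 - y1*Y2) - (x2*X1 - y2*Y1))*Si + ((x1*Y2 + y1*X2) - (x2*Y1 + y2*X1))*Sr)) by ring.
  rewrite e1, e2, e3, e4, e5; ring. }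
assert (Pi : X2*Si + Y2*Sr + y1 = 0).
{ replace (X2*Si + Y2*Sr + y1) with
   (-(X2*Si + Y2*Sr)*(x1^2+y1^2-X1^2-Y1^2-1) + (X1*Sr-Y1*Si)*(x1 * y2 - y1 * x2 - X1 * Y2 + Y1 * X2)
    + (X1*Si+Y1*Sr)*(x1 * x2 + y1 * y2 - X1 * X2 - Y1 * Y2)
    + x1*(((x1*X2 - y1*Y2) - (x2*X1 - y2*Y1))*Si + ((x1*Y2 + y1*X2) - (x2*Y1 + y2*X1))*Sr)
    - y1*(((x1*X2 - y1*Y2) - (x2*X1 - y2*Y1))*Sr - ((x1*Y2 + y1*X2) - (x2*Y1 + y2*X1))*Si - 1)) by ring.
  rewrite e1, e2, e3, e4, e5; ring. }
assert (e6 : 1 - c*c - s*s = 0) by lra.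
replace (c * (y1 + Y2) + s * (x1 + X2)) with
  (c*(X2*Si + Y2*Sr + y1) - s*(X2*Sr - Y2*Si - x1) + (c*Y2 + s*X2)*(1 - c*c - s*s))
  by (unfold Sr, Si; ring).
rewrite Pr, Pi, e6; ring.

Qed.
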